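(* Let $\mathcal{M}^c=\langle\mathcal{W},\mathcal{N},\mathcal{V}\rangle$ be the canonical model for $\mathbb{PCL}$ defined in the context. For every formula $F$, every maximal consistent set $X$ and every formula $A\in X$: $F\in X$ if and only if $\mathcal{M}^c,(X,A)\Vdash F$.
   Context: Formulas $\mathcal{L}::=p\mid\bot\mid A\wedge B\mid A\lor B\mid A\to B\mid A>B$. Derivability $\vdash$ is in the axiom system of $\mathbb{PCL}$: classical propositional logic, rules (RCEA) from $A\leftrightarrow B$ infer $(A>C)\leftrightarrow(B>C)$, (RCK) from $A\to B$ infer $(C>A)\to(C>B)$, axioms (ID) $A>A$, (R-And) $(A>B)\wedge(A>C)\to(A>(B\wedge C))$, (CM) $(A>B)\wedge(A>C)\to((A\wedge B)>C)$, (OR) $(A>C)\wedge(B>C)\to((A\lor B)>C)$. A set $S$ is inconsistent if $\vdash(B_1\wedge\dots\wedge B_n)\to\bot$ for some $B_i\in S$; maximal consistent sets are consistent sets with no consistent proper superset. For a maximal consistent set $X$: $X^B=\{C\mid B>C\in X\}$; $A\le_X B$ iff $(A\lor B)>A\in X$. Canonical model: $\mathcal{W}=\{(X,A)\mid X$ maximal consistent, $A\in X\}$; $\mathcal{V}(p)=\{(X,A)\in\mathcal{W}\mid p\in X\}$; for $(X,A),(Y,B)\in\mathcal{W}$, $S_X(Y,B)=\{(Z,C)\in\mathcal{W}\mid X^C\subseteq Z,\ C\le_X B,\ B\notin Z\}\cup\{(Y,B)\}$; $\mathcal{N}(X,A)=\{S_X(Y,B)\mid (Y,B)\in\mathcal{W},\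 X^B\subseteq Y\}$. Forcing in a neighbourhood model $\langle W,N,V\rangle$: atoms via $V$, Boolean connectives classical, and $x\Vdash G>H$ iff for all $\alpha\in N(x)$, if some $y\in\alpha$ forces $G$, then there is $\beta\in N(x)$ with $\beta\subseteq\alpha$ such that some $y\in\beta$ forces $G$ and all $y\in\beta$ force $G\to H$. *)

(* Defs.v *)
From Stdlib Require Import List.
Import ListNotations.
Set Implicit Arguments.

Inductive form : Type :=
| Var : nat -> form
| Bot : form
| And : form -> form -> form
| Or  : form -> form -> form
| Imp : form -> form -> form
| Cond : form -> form -> form.

Definition Iff (A B : form) : form := And (Imp A B) (Imp B A).

(** Classical propositional logic: a formula is a tautology if it is true under
    every boolean valuation of its propositional atoms, where the atoms are the
    variables and the conditional formulas A > B (treated as opaque). *)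
Fixpoint beval (v : form -> bool) (F : form) : bool :=
  match F with
  | Var _ => v F
  | Bot => false
  | And A B => andb (beval v A) (beval v B)
  | Or A B => orb (beval v A) (beval v B)
  | Imp A B => orb (negb (beval v A)) (beval v B)
  | Cond _ _ => v F
  end.

Definition taut (F : form) : Prop := forall v : form -> bool, beval v F = true.

Inductive Der : form -> Prop :=
| D_taut : forall A, taut A -> Der A
| D_mp : forall A B, Der (Imp A B) -> Der A -> Der B
| D_RCEA : forall A B C, Der (Iff A B) -> Der (Iff (Cond A C) (Cond B C))
| D_RCK : forall A B C, Der (Imp A B) -> Der (Imp (Cond C A) (Cond C B))
| D_ID : forall A, Der (Cond A A)
| D_RAnd : forall A B C,
    Der (Imp (And (Cond A B) (Cond A C)) (Cond A (And B C)))
| D_CM : forall A B C,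
    Der (Imp (And (Cond A B) (Cond A C)) (Cond (And A B) C))
| D_OR : forall A B C,
    Der (Imp (And (Cond A C) (Cond B C)) (Cond (Or A B) C)).

Definition fset := form -> Prop.

Fixpoint bigAnd (l : list form) : form :=
  match l with
  | [] => Imp Bot Bot
  | [B] => B
  | B :: l' => And B (bigAnd l')
  end.

Definition inconsistent (S : fset) : Prop :=
  exists l : list form, (forall B, In B l -> S B) /\ Der (Imp (bigAnd l) Bot).

Definition consistent (S : fset) : Prop := ~ inconsistent S.

Definition maxcons (X : fset) : Prop :=
  consistent X /\
  forall Y : fset, consistent Y -> (forall F, X F -> Y F) -> (forall F, Y F -> X F).

Definition condset (X : fset) (B : form) : fset := fun C => X (Cond B C).
Definition leX (X : fset) (A B : form) : Prop := X (Cond (Or A B) A).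

Definition subset (S T : fset) : Prop := forall F, S F -> T F.

Record nmodel := {
  W : Type;
  N : W -> (W -> Prop) -> Prop;
  V : nat -> W -> Prop
}.

Fixpoint forces (M : nmodel) (x : W M) (F : form) : Prop :=
  match F with
  | Var p => V M p x
  | Bot => False
  | And A B => forces M x A /\ forces M x B
  | Or A B => forces M x A \/ forces M x B
  | Imp A B => forces M x A -> forces M x B
  | Cond G H =>
      forall alpha : W M -> Prop, N M x alpha ->
        (exists y, alpha y /\ forces M y G) ->
        exists beta : W M -> Prop,
          N M x beta /\ (forall y, beta y -> alpha y) /\
          (exists y, beta y /\ forces M y G) /\
          (forall y, beta y -> forces M y G -> forces M y H)
  end.

Definition cworld : Type := { p : fset * form | maxcons (fst p) /\ fst p (snd p) }.
Definition wset (w : cworld) : fset := fst (proj1_sig w).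
Definition wform (w : cworld) : form := snd (proj1_sig w).

Definition Sset (X : fset) (Y : fset) (B : form) : cworld -> Prop :=
  fun w =>
    (subset (condset X (wform w)) (wset w) /\ leX X (wform w) B /\ ~ wset w B)
    \/ (wset w = Y /\ wform w = B).

Definition cN (x : cworld) (alpha : cworld -> Prop) : Prop :=
  exists y : cworld,
    subset (condset (wset x) (wform y)) (wset y) /\
    (forall w, alpha w <-> Sset (wset x) (wset y) (wform y) w).

Definition cV (p : nat) (x : cworld) : Prop := wset x (Var p).

Definition canonical_model : nmodel := {| W := cworld; N := cN; V := cV |}.

Definition mkworld (X : fset) (A : form) (H : maxcons X /\ X A) : cworld :=
  exist _ (X, A) H.

(* Main.v *)
Require Import Defs.
From Stdlib Require Import List Classical Lia PeanoNat.
Import ListNotations.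
Set Implicit Arguments.

Lemma imp_true v A B : beval v (Imp A B) = true <-> (beval v A = true -> beval v B = true).
Proof. simpl. destruct (beval v A), (beval v B); simpl; intuition congruence. Qed.

Lemma beval_bigAnd v l : beval v (bigAnd l) = true <-> (forall B, In B l -> beval v B = true).
Proof.
  induction l as [|a l IH].
  - simpl. split; [intros _ B []| reflexivity].
  - assert (E : beval v (bigAnd (a :: l)) = andb (beval v a) (beval v (bigAnd l))).
    { destruct l as [|b l']; [simpl; destruct (beval v a); reflexivity | reflexivity]. }
    rewrite E, Bool.andb_true_iff, IH. split.
    + intros [H1 H2] B [<-|HB]; auto.
    + intros H; split; [apply H; left; reflexivity | intros B HB; apply H; right; exact HB].
Qed.

Ltac btaut := let v := fresh "v" in intro v; simpl;
  repeat match goal with |- context [beval v ?x] => destruct (beval v x) end; reflexivity.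

Definition Prov (S0 : fset) (F : form) :=
  exists l, (forall B, In B l -> S0 B) /\ Der (Imp (bigAnd l) F).

Lemma Prov_in S0 F : S0 F -> Prov S0 F.
Proof. intros H. exists [F]. split. intros B [<-|[]]; exact H. apply D_taut. btaut. Qed.

Lemma Prov_der S0 F : Der F -> Prov S0 F.
Proof. intros H. exists []. split. intros B []. apply (@D_mp F). apply D_taut. btaut. exact H. Qed.

Lemma Prov_mono S0 T F : subset S0 T -> Prov S0 F -> Prov T F.
Proof. intros HS [l [Hl D]]. exists l. split; auto. Qed.

Lemma Prov_comb S0 a b c : (forall v, beval v a = true -> beval v b = true -> beval v c = true) ->
  Prov S0 a -> Prov S0 b -> Prov S0 c.
Proof.
  intros Hs [l1 [H1 D1]] [l2 [H2 D2]]. exists (l1 ++ l2). split.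
  - intros B HB. apply in_app_or in HB. destruct HB; auto.
  - apply (@D_mp (Imp (bigAnd l2) b)); [apply (@D_mp (Imp (bigAnd l1) a)); [apply D_taut|exact D1]|exact D2].
    intro v. apply imp_true; intro E1. apply imp_true; intro E2. apply imp_true; intro E.
    rewrite beval_bigAnd in E. rewrite imp_true in E1, E2.
    apply Hs; [apply E1 | apply E2]; apply beval_bigAnd; intros B HB; apply E; apply in_or_app; auto.
Qed.

Definition add (S0 : fset) (F : form) : fset := fun G => S0 G \/ G = F.

Lemma split_list S0 F l : (forall B, In B l -> add S0 F B) ->
  exists l', (forall B, In B l' -> S0 B) /\ (forall B, In B l -> In B l' \/ B = F).
Proof.
  induction l as [|a l IH]; intros H.
  - exists []. split; intros B [].
  - destruct IH as [l' [H1 H2]]. intros B HB; apply H; right; auto.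
    destruct (H a (or_introl eq_refl)) as [Ha|Ha].
    + exists (a :: l'). split.
      * intros B [<-|HB]; auto.
      * intros B [<-|HB]; [left; left; reflexivity|]. destruct (H2 B HB); [left; right|right]; auto.
    + exists l'. split; auto. intros B [<-|HB]; [right; exact Ha|auto].
Qed.

Lemma Prov_add S0 F P : Prov (add S0 F) P -> Prov S0 (Imp F P).
Proof.
  intros [l [Hl D]]. destruct (split_list l Hl) as [l' [H1 H2]].
  exists l'. split; auto. apply (@D_mp (Imp (bigAnd l) P)); [apply D_taut|exact D].
  intro v. apply imp_true; intro E1. apply imp_true; intro E2. apply imp_true; intro E3.
  rewrite imp_true in E1. apply E1. apply beval_bigAnd. intros B HB. destruct (H2 B HB) as [HB2| ->]; auto.
  rewrite beval_bigAnd in E2. auto.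
Qed.

Lemma cons_mono S0 T : subset S0 T -> consistent T -> consistent S0.
Proof. intros HS HT HI. apply HT. exact (Prov_mono HS HI). Qed.

Section MC.
Variable X : fset.
Hypothesis HX : maxcons X.

Lemma mc_prov F : Prov X F -> X F.
Proof.
  intros HP. apply ((proj2 HX) (add X F)); [| intros G HG; left; exact HG | right; reflexivity].
  intros HI. apply (proj1 HX). apply Prov_add in HI.
  eapply Prov_comb; [|exact HP|exact HI]. intros v E1 E2. simpl in E2. rewrite E1 in E2. exact E2.
Qed.

Lemma mc_der F : Der F -> X F.
Proof. intros; apply mc_prov, Prov_der; auto. Qed.

Lemma mc_comb a b c : (forall v, beval v a = true -> beval v b = true -> beval v c = true) ->
  X a -> X b -> X c.
Proof. intros Hs Ha Hb. apply mc_prov. eapply Prov_comb; [exact Hs|apply Prov_in; exact Ha|apply Prov_in; exact Hb]. Qed.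

Lemma mc_mp a b : X (Imp a b) -> X a -> X b.
Proof. apply mc_comb. intros v E1 E2. rewrite imp_true in E1. auto. Qed.

Lemma mc_t1 a b : (forall v, beval v a = true -> beval v b = true) -> X a -> X b.
Proof. intros Hs Ha. eapply mc_comb; [|exact Ha|exact Ha]. intros v E _; exact (Hs v E). Qed.

Lemma mc_em F : X F \/ X (Imp F Bot).
Proof.
  destruct (classic (consistent (add X F))) as [Hc|Hc].
  - left. apply ((proj2 HX) (add X F) Hc); [intros G HG; left; exact HG | right; reflexivity].
  - right. apply mc_prov. apply Prov_add. apply NNPP. exact Hc.
Qed.

Lemma mc_notboth F : X F -> X (Imp F Bot) -> False.
Proof. intros H1 H2. apply (proj1 HX). apply Prov_in. exact (mc_mp H2 H1). Qed.

Lemma mc_bot : ~ X Bot.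
Proof. intros H. apply (proj1 HX). apply Prov_in. exact H. Qed.

Lemma mc_and a b : X (And a b) <-> X a /\ X b.
Proof.
  split.
  - intros H; split; (apply (mc_t1 (a:=And a b)); [intros v E; simpl in E; apply Bool.andb_true_iff in E; tauto | exact H]).
  - intros [Ha Hb]. apply (mc_comb (a:=a) (b:=b)); auto. intros v E1 E2; simpl; rewrite E1, E2; reflexivity.
Qed.

Lemma mc_or a b : X (Or a b) <-> X a \/ X b.
Proof.
  split.
  - intros H. destruct (mc_em a) as [Ha|Ha]; [left; exact Ha|right].
    apply (mc_comb (a:=Or a b) (b:=Imp a Bot)); auto. intros v E1 E2. simpl in *.
    destruct (beval v a), (beval v b); simpl in *; congruence.
  - intros [H|H]; eapply mc_t1; try exact H; intros v E; simpl; rewrite E;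
      [reflexivity| destruct (beval v a); reflexivity].
Qed.

Lemma mc_imp a b : X (Imp a b) <-> (X a -> X b).
Proof.
  split.
  - intros H Ha. exact (mc_mp H Ha).
  - intros H. destruct (mc_em a) as [Ha|Ha].
    + apply (mc_t1 (a:=b)); [|auto]. intros v E; simpl; rewrite E; destruct (beval v a); reflexivity.
    + apply (mc_t1 (a:=Imp a Bot)); [|auto]. intros v E; simpl in *; destruct (beval v a); simpl in *; congruence.
Qed.

End MC.
Arguments mc_mp {X} HX {a b}.
Arguments mc_comb {X} HX {a b c}.
Arguments mc_notboth {X} HX {F}.
Arguments mc_t1 {X} HX {a b}.
Section CL.
Variable X : fset.
Hypothesis HX : maxcons X.

Lemma c_rw a b c : Der (Imp b c) -> X (Cond a b) -> X (Cond a c).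
Proof. intros D H. exact (mc_mp HX (mc_der HX (D_RCK a D)) H). Qed.

Lemma c_rwt a b c : taut (Imp b c) -> X (Cond a b) -> X (Cond a c).
Proof. intros T; apply c_rw, D_taut, T. Qed.

Lemma c_lle a b c : taut (Iff a b) -> X (Cond a c) -> X (Cond b c).
Proof.
  intros T H. pose proof (mc_der HX (D_RCEA c (D_taut T))) as E.
  unfold Iff in E. apply (mc_and HX) in E. exact (mc_mp HX (proj1 E) H).
Qed.

Lemma c_id a : X (Cond a a).
Proof. apply (mc_der HX). apply D_ID. Qed.

Lemma c_and a b c : X (Cond a b) -> X (Cond a c) -> X (Cond a (And b c)).
Proof. intros H1 H2. apply (mc_mp HX (mc_der HX (D_RAnd a b c))). apply (mc_and HX); auto. Qed.

Lemma c_cm a b c : X (Cond a b) -> X (Cond a c) -> X (Cond (And a b) c).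
Proof. intros H1 H2. apply (mc_mp HX (mc_der HX (D_CM a b c))). apply (mc_and HX); auto. Qed.

Lemma c_or a b c : X (Cond a c) -> X (Cond b c) -> X (Cond (Or a b) c).
Proof. intros H1 H2. apply (mc_mp HX (mc_der HX (D_OR a b c))). apply (mc_and HX); auto. Qed.

Lemma c_cut K P Q : X (Cond K P) -> X (Cond (And K P) Q) -> X (Cond K Q).
Proof.
  intros H1 H2.
  assert (A1 : X (Cond (And K (Imp P Bot)) (Imp P Q))).
  { eapply c_rwt; [|apply c_id]. btaut. }
  assert (A2 : X (Cond (And K P) (Imp P Q))).
  { eapply c_rwt; [|exact H2]. btaut. }
  assert (A3 : X (Cond K (Imp P Q))).
  { eapply c_lle; [|exact (c_or A2 A1)]. btaut. }
  eapply c_rwt; [|exact (c_and H1 A3)]. btaut.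
Qed.

Lemma cond_closed A l phi : (forall B, In B l -> X (Cond A B)) -> Der (Imp (bigAnd l) phi) ->
  X (Cond A phi).
Proof.
  intros Hl D. apply (c_rw D). clear D. induction l as [|a l IH].
  - eapply c_rwt; [|apply c_id]. btaut.
  - destruct l as [|b l'].
    + apply Hl; left; reflexivity.
    + change (bigAnd (a :: b :: l')) with (And a (bigAnd (b :: l'))).
      apply c_and; [apply Hl; left; reflexivity|]. apply IH. intros B HB; apply Hl; right; exact HB.
Qed.

Lemma cons_ext A D : ~ X (Cond A D) -> consistent (add (condset X A) (Imp D Bot)).
Proof.
  intros Hn HI. apply Prov_add in HI. destruct HI as [l [Hl Dl]].
  apply Hn. eapply c_rwt; [|exact (cond_closed l Hl Dl)]. btaut.
Qed.

End CL.
Arguments c_rw {X} HX {a b c}.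
Arguments c_rwt {X} HX {a b c}.
Arguments c_lle {X} HX {a b c}.
Arguments c_and {X} HX {a b c}.
Arguments c_cm {X} HX {a b c}.
Arguments c_or {X} HX {a b c}.
Arguments c_cut {X} HX {K P Q}.
Arguments cond_closed {X} HX {A l phi}.
Arguments cons_ext {X} HX {A D}.

Definition step (T : fset) (F : form) : fset := fun G => T G \/ (G = F /\ consistent (add T F)).
Fixpoint stepl (T : fset) (l : list form) : fset :=
  match l with [] => T | F :: l' => stepl (step T F) l' end.

Fixpoint forms (n : nat) : list form :=
  match n with
  | 0 => [Bot; Var 0]
  | S k => let l := forms k in
     Var (S k) :: l ++ flat_map (fun a => flat_map (fun b => [And a b; Or a b; Imp a b; Cond a b]) l) l
  end.

Lemma forms_mono n m F : n <= m -> In F (forms n) -> In F (forms m).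
Proof.
  intros H. induction H; auto. intros HF. simpl. right. apply in_or_app. left. auto.
Qed.

Lemma forms_bin n a b : In a (forms n) -> In b (forms n) ->
  In (And a b) (forms (S n)) /\ In (Or a b) (forms (S n)) /\ In (Imp a b) (forms (S n)) /\ In (Cond a b) (forms (S n)).
Proof.
  intros Ha Hb. simpl.
  assert (K : forall c, In c [And a b; Or a b; Imp a b; Cond a b] -> In c (Var (S n) :: forms n ++
     flat_map (fun a => flat_map (fun b => [And a b; Or a b; Imp a b; Cond a b]) (forms n)) (forms n))).
  { intros c Hc. right. apply in_or_app. right. apply in_flat_map. exists a. split; auto.
    apply in_flat_map. exists b. split; auto. }
  repeat split; apply K; simpl; tauto.
Qed.

Lemma forms_all F : exists n, In F (forms n).
Proof.
  induction F as [p| |a [n1 H1] b [n2 H2]|a [n1 H1] b [n2 H2]|a [n1 H1] b [n2 H2]|a [n1 H1] b [n2 H2]];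
  [destruct p as [|k]; [exists 0; simpl; tauto | exists (S k); simpl; tauto]
  | exists 0; simpl; tauto | .. ];
  exists (S (Nat.max n1 n2));
    assert (Ha : In a (forms (Nat.max n1 n2))) by (apply (forms_mono (n:=n1)); [lia|auto]);
    assert (Hb : In b (forms (Nat.max n1 n2))) by (apply (forms_mono (n:=n2)); [lia|auto]);
    pose proof (@forms_bin _ _ _ Ha Hb); tauto.
Qed.

Fixpoint chain (S0 : fset) (n : nat) : fset :=
  match n with 0 => S0 | S k => stepl (chain S0 k) (forms k) end.

Definition lind (S0 : fset) : fset := fun F => exists n, chain S0 n F.

Lemma step_cons T F : consistent T -> consistent (step T F).
Proof.
  intros HT. destruct (classic (consistent (add T F))) as [Hc|Hc].
  - eapply cons_mono; [|exact Hc]. intros G [HG|[-> _]]; [left; exact HG|right; reflexivity].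
  - eapply cons_mono; [|exact HT]. intros G [HG|[_ HG]]; [exact HG|contradiction].
Qed.

Lemma stepl_cons l : forall T, consistent T -> consistent (stepl T l).
Proof. induction l; simpl; auto. intros T HT. apply IHl, step_cons, HT. Qed.

Lemma stepl_sub l : forall T, subset T (stepl T l).
Proof. induction l; simpl; intros T G HG; auto. apply IHl. left; exact HG. Qed.

Lemma chain_cons S0 n : consistent S0 -> consistent (chain S0 n).
Proof. intros H; induction n; simpl; auto. apply stepl_cons; auto. Qed.

Lemma chain_mono S0 n m : n <= m -> subset (chain S0 n) (chain S0 m).
Proof. intros H; induction H; intros G HG; auto. simpl. apply stepl_sub. auto. Qed.

Lemma stepl_key l : forall T F, In F l -> exists T', subset T' (stepl T l) /\
  (consistent (add T' F) -> stepl T l F).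
Proof.
  induction l as [|a l IH]; intros T F HF; [destruct HF|].
  destruct HF as [<-|HF].
  - exists T. split.
    + intros G HG. simpl. apply stepl_sub. left; exact HG.
    + intros Hc. simpl. apply stepl_sub. right. split; auto.
  - destruct (IH (step T a) F HF) as [T' [H1 H2]]. exists T'. split; auto.
Qed.

Lemma lindenbaum S0 : consistent S0 -> maxcons (lind S0) /\ subset S0 (lind S0).
Proof.
  intros HS. assert (Hc : consistent (lind S0)).
  { intros [l [Hl D]].
    assert (E : exists n, forall B, In B l -> chain S0 n B).
    { clear D. induction l as [|a l IH].
      - exists 0. intros B [].
      - destruct IH as [n Hn]. intros B HB; apply Hl; right; auto.
        destruct (Hl a (or_introl eq_refl)) as [m Hm].
        exists (Nat.max n m). intros B [<-|HB].
        + eapply chain_mono; [|exact Hm]. lia.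
        + eapply chain_mono; [|apply Hn; exact HB]. lia. }
    destruct E as [n Hn]. apply (chain_cons n HS). exists l. split; auto. }
  split; [split; [exact Hc|]|].
  - intros Y HY Hsub F HF. destruct (forms_all F) as [n Hn].
    destruct (@stepl_key _ (chain S0 n) _ Hn) as [T' [H1 H2]].
    exists (S n). simpl. apply H2. eapply cons_mono; [|exact HY].
    intros G [HG| ->]; [|exact HF]. apply Hsub. exists (S n). apply H1. exact HG.
  - intros G HG. exists 0. exact HG.
Qed.
Section DER.
Variable X : fset.
Hypothesis HX : maxcons X.

Lemma F1 G H B : X (Cond G H) -> X (Cond (Or G B) (Imp G H)).
Proof.
  intros h. assert (A1 : X (Cond G (Imp G H))) by (eapply (c_rwt HX); [|exact h]; btaut).
  assert (A2 : X (Cond (And B (Imp G Bot)) (Imp G H))) by (eapply (c_rwt HX); [|apply (c_id HX)]; btaut).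
  eapply (c_lle HX); [|exact (c_or HX A1 A2)]. btaut.
Qed.

Lemma F2 G B : leX X (Or G B) B.
Proof. unfold leX. eapply (c_lle HX); [|apply (c_id HX (Or G B))]. btaut. Qed.

Lemma F3 C G B : X (Cond (Or C (Or G B)) C) -> X (Cond (Or C B) C).
Proof.
  intros h. assert (A1 : X (Cond (Or C (Or G B)) (Or C B))) by (eapply (c_rwt HX); [|exact h]; btaut).
  eapply (c_lle HX); [|exact (c_cm HX A1 h)]. btaut.
Qed.

Lemma F4 G H B : X (Cond G H) -> X (Cond (Or G B) B) -> X (Cond B (Imp G H)).
Proof.
  intros h1 h2. eapply (c_lle HX); [|exact (c_cm HX h2 (F1 B h1))]. btaut.
Qed.

Lemma L1a C B G : X (Cond (Or C B) C) -> X (Cond (Or G B) B) -> X (Cond C (Imp G B)).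
Proof.
  intros h2 h1.
  assert (s1 : X (Cond (Or C (Or G B)) (Or B C))).
  { eapply (c_lle HX); [|apply (c_or HX (a:=Or G B) (b:=Or C B))]; [btaut| |];
      (eapply (c_rwt HX); [|eassumption]; btaut). }
  assert (s3 : X (Cond (And (Or C (Or G B)) (Or B C)) C)) by (eapply (c_lle HX); [|exact h2]; btaut).
  pose proof (c_cut HX s1 s3) as s4.
  assert (s5 : X (Cond (Or C (Or G B)) (Imp G B))).
  { eapply (c_lle HX); [|apply (c_or HX (a:=Or G B) (b:=And C (And (Imp G Bot) (Imp B Bot))))]; [btaut| |].
    - eapply (c_rwt HX); [|exact h1]; btaut.
    - eapply (c_rwt HX); [|apply (c_id HX)]; btaut. }
  eapply (c_lle HX); [|exact (c_cm HX s4 s5)]. btaut.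
Qed.

Lemma L1 Z C B G : maxcons Z -> subset (condset X C) Z -> X (Cond (Or C B) C) -> ~ Z B -> Z G ->
  X (Cond (Or G B) B) -> False.
Proof.
  intros HZ Hs h2 nB hG h1. apply nB. apply (mc_mp HZ (a:=G)); auto.
  apply Hs. unfold condset. exact (L1a h2 h1).
Qed.
End DER.
Arguments F1 {X} HX {G H} B _.
Arguments F2 {X} HX G B.
Arguments F3 {X} HX {C G B} _.
Arguments F4 {X} HX {G H B} _ _.
Arguments L1 {X} HX {Z C B G} _ _ _ _ _ _.

Lemma wmax (w : cworld) : maxcons (wset w).
Proof. exact (proj1 (proj2_sig w)). Qed.
Lemma win (w : cworld) : wset w (wform w).
Proof. exact (proj2 (proj2_sig w)). Qed.

Definition mkw (Y : fset) (B : form) (HY : maxcons Y) (HB : Y B) : cworld := exist _ (Y, B) (conj HY HB).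

Lemma truth : forall F (w : cworld), wset w F <-> forces canonical_model w F.
Proof.
  induction F as [p| |F1 IH1 F2 IH2|F1 IH1 F2 IH2|F1 IH1 F2 IH2|G IHG H IHH]; intros w;
    pose proof (wmax w) as HX.
  - simpl. unfold cV. tauto.
  - simpl. split; [apply (mc_bot HX)|contradiction].
  - pose proof (mc_and HX F1 F2). pose proof (IH1 w). pose proof (IH2 w). simpl. tauto.
  - pose proof (mc_or HX F1 F2). pose proof (IH1 w). pose proof (IH2 w). simpl. tauto.
  - pose proof (mc_imp HX F1 F2). pose proof (IH1 w). pose proof (IH2 w). simpl. tauto.
  - simpl. set (X := wset w) in *. split.
    + intros HGH alpha [y [Hy Halpha]] [z [Hz HzG]].
      apply IHG in HzG.
      destruct (classic (X (Cond (Or G (wform y)) (wform y)))) as [HB|HB].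
      * exists alpha. split; [exists y; split; auto|]. split; [auto|]. split; [exists z; split; auto; apply IHG; auto|].
        intros u Hu HuG. apply IHG in HuG. apply IHH. apply Halpha in Hu.
        destruct Hu as [[Hu1 [Hu2 Hu3]] | [Hu1 Hu2]].
        -- exfalso. exact (L1 HX (wmax u) Hu1 Hu2 Hu3 HuG HB).
        -- rewrite Hu1 in HuG |- *. apply (mc_mp (wmax y) (a:=G)); auto.
           apply Hy. unfold condset. exact (F4 HX HGH HB).
      * destruct (lindenbaum (cons_ext HX HB)) as [HY' Hsub].
        set (Y' := lind (add (condset X (Or G (wform y))) (Imp (wform y) Bot))) in *.
        assert (HinGB : Y' (Or G (wform y))) by (apply Hsub; left; apply (c_id HX)).
        assert (HnB : ~ Y' (wform y)) by (intros E; apply (mc_notboth HY' E); apply Hsub; right; reflexivity).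
        assert (HG' : Y' G) by (apply (mc_or HY') in HinGB; tauto).
        set (y' := @mkw Y' _ HY' HinGB).
        exists (Sset X Y' (Or G (wform y))). split; [|split; [|split]].
        -- exists y'. split; [|intros; tauto]. intros F HF. apply Hsub. left. exact HF.
        -- intros u Hu. apply Halpha. left.
           destruct Hu as [[Hu1 [Hu2 Hu3]] | [Hu1 Hu2]].
           ++ split; [exact Hu1|]. split; [exact (F3 HX Hu2)|].
              intros E. apply Hu3. apply (mc_or (wmax u)). right; exact E.
           ++ rewrite Hu1, Hu2. split; [intros F HF; apply Hsub; left; exact HF|].
              split; [apply (F2 HX)|exact HnB].
        -- exists y'. split; [right; split; reflexivity|]. apply IHG. exact HG'.
        -- intros u Hu HuG. apply IHG in HuG. apply IHH.
           destruct Hu as [[Hu1 [Hu2 Hu3]] | [Hu1 Hu2]].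
           ++ exfalso. apply Hu3. apply (mc_or (wmax u)). left; exact HuG.
           ++ rewrite Hu1 in HuG |- *. apply (mc_mp HY' (a:=G)); auto.
              apply Hsub. left. exact (F1 HX (wform y) HGH).
    + intros Hforce. destruct (classic (X (Cond G H))) as [|HnGH]; [assumption|exfalso].
      destruct (lindenbaum (cons_ext HX HnGH)) as [HY Hsub].
      set (Y := lind (add (condset X G) (Imp H Bot))) in *.
      assert (HYG : Y G) by (apply Hsub; left; apply (c_id HX)).
      assert (HnH : ~ Y H) by (intros E; apply (mc_notboth HY E); apply Hsub; right; reflexivity).
      set (y := @mkw Y _ HY HYG).
      destruct (Hforce (Sset X Y G)) as [beta [[y2 [Hy2 Hbeta]] [Hsb [[u [Hu HuG]] Hall]]]].
      * exists y. split; [intros F HF; apply Hsub; left; exact HF| intros; tauto].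
      * exists y. split; [right; split; reflexivity|]. apply IHG. exact HYG.
      * assert (Hc : beta y2) by (apply Hbeta; right; split; reflexivity).
        pose proof (Hsb y2 Hc) as Ha.
        apply IHG in HuG.
        destruct Ha as [[Ha1 [Ha2 Ha3]] | [Ha1 Ha2]].
        -- apply Hbeta in Hu. destruct Hu as [[Hu1 [Hu2 Hu3]] | [Hu1 Hu2]].
           ++ apply (L1 HX (wmax u) Hu1 Hu2 Hu3 HuG). eapply (c_lle HX); [|exact Ha2]. btaut.
           ++ apply Ha3. rewrite <- Hu1. exact HuG.
        -- apply HnH. rewrite <- Ha1. apply IHH. apply Hall; [exact Hc|]. apply IHG. rewrite Ha1. exact HYG.
Qed.

Theorem mainTheorem3 :
  forall (F : form) (X : fset) (A : form) (HX : maxcons X) (HA : X A),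
    X F <-> @forces canonical_model (@mkworld X A (conj HX HA)) F.
Proof.
  intros F X A HX HA. exact (truth F (@mkworld X A (conj HX HA))).
Qed.
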